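(* Let $(X,\mathcal{U})$ be a sequentially complete separated uniform space, with $\mathcal{F}$ and $\mathcal{V}$ as in the context, and let $T:X\to X$ be a Ćirić-contraction. Then for each $x\in X$ the sequence $\{T^nx\}$ converges to a fixed point of $T$. Moreover, if the functions $a_2$ and $a_3$ in the contractive condition coincide on $X\times X$, then the fixed point is unique, i.e. there is a unique fixed point $x^*$ of $T$ and $\{T^nx\}$ converges to $x^*$ for every $x\in X$.
   Context: A uniform space $(X,\mathcal{U})$ is a nonempty set $X$ with a uniformity $\mathcal{U}$ on $X$. For $U,V\subseteq X\times X$, $\Delta(X)=\{(x,x):x\in X\}$ and $U\circ V=\{(x,y):\exists z\in X,\ (x,z)\in V,\ (z,y)\in U\}$. $X$ is separated if $\bigcap\mathcal{U}=\Delta(X)$. A sequence $\{x_n\}$ converges to $x$ if for every $U\in\mathcal{U}$ there is $N$ with $(x_n,x)\in U$ for $n\ge N$; it is Cauchy if for every $U\in\mathcal{U}$ there is $N$ with $(x_m,x_n)\in U$ for $m,n\ge N$; $X$ is sequentially complete if every Cauchy sequence converges. $\mathcal{F}$ is a nonempty collection of (uniformly continuous) pseudometrics on $X$ generating $\mathcal{U}$, and $\mathcal{V}$ is the family of all sets $V=\bigcap_{i=1}^m\{(x,y)\in X\times X:\rho_i(x,y)<r_i\}$ with $m\ge1$, $\rho_i\in\mathcal{F}$, $r_i>0$; $\mathcal{V}$ is a base for $\mathcal{U}$. For such $V$ and $\beta>0$, $\beta V=\bigcap_{i=1}^m\{(x,y):\rho_i(x,y)<\beta r_i\}$. A map $T:X\to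 X$ is a Ćirić-contraction if there are positive-valued functions $a_1,a_2,a_3,a_4$ on $X\times X$ with $\sup\{a_1(x,y)+a_2(x,y)+a_3(x,y)+2a_4(x,y):x,y\in X\}<1$ such that for all $x,y\in X$ and all $V_1,\dots,V_5\in\mathcal{V}$: if $(x,y)\in V_1$, $(x,Tx)\in V_2$, $(y,Ty)\in V_3$, $(x,Ty)\in V_4$, $(y,Tx)\in V_5$, then $(Tx,Ty)\in a_1(x,y)V_1\circ a_2(x,y)V_2\circ a_3(x,y)V_3\circ a_4(x,y)V_4\circ a_4(x,y)V_5$. *)

(* Defs.v *)
From Stdlib Require Import Reals List.
Open Scope R_scope.
Import ListNotations.

Set Implicit Arguments.

Definition is_pseudometric (X : Type) (d : X -> X -> R) : Prop :=
  (forall x, d x x = 0) /\ (forall x y, d x y = d y x) /\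
  (forall x y z, d x z <= d x y + d y z).

Definition pm_family (X : Type) (F : (X -> X -> R) -> Prop) : Prop :=
  (exists rho, F rho) /\ (forall rho, F rho -> is_pseudometric rho).

(* A basic entourage V = /\_{i} {(x,y) | rho_i x y < r_i} is represented by its
   (nonempty) list of pairs (rho_i, r_i) with rho_i in F and r_i > 0. *)
Definition basic_rep (X : Type) := list ((X -> X -> R) * R).

Definition valid_rep (X : Type) (F : (X -> X -> R) -> Prop) (l : basic_rep X) : Prop :=
  l <> [] /\ Forall (fun p => F (fst p) /\ 0 < snd p) l.

Definition vset (X : Type) (l : basic_rep X) (x y : X) : Prop :=
  Forall (fun p => fst p x y < snd p) l.

Definition vscale (X : Type) (beta : R) (l : basic_rep X) : basic_rep X :=
  map (fun p => (fst p, beta * snd p)) l.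

(* U o V = {(x,y) | exists z, (x,z) in V, (z,y) in U} *)
Definition rcomp (X : Type) (U V : X -> X -> Prop) (x y : X) : Prop :=
  exists z, V x z /\ U z y.

Definition unif (X : Type) (F : (X -> X -> R) -> Prop) (W : X -> X -> Prop) : Prop :=
  exists l, valid_rep F l /\ forall x y, vset l x y -> W x y.

Definition separated (X : Type) (F : (X -> X -> R) -> Prop) : Prop :=
  forall x y : X, (forall W, unif F W -> W x y) <-> x = y.

Definition converges (X : Type) (F : (X -> X -> R) -> Prop) (u : nat -> X) (x : X) : Prop :=
  forall W, unif F W -> exists N, forall n, (N <= n)%nat -> W (u n) x.

Definition cauchy (X : Type) (F : (X -> X -> R) -> Prop) (u : nat -> X) : Prop :=
  forall W, unif F W -> exists N, forall m n, (N <= m)%nat -> (N <= n)%nat -> W (u m) (u n).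

Definition seq_complete (X : Type) (F : (X -> X -> R) -> Prop) : Prop :=
  forall u : nat -> X, cauchy F u -> exists x, converges F u x.

Definition ciric_with (X : Type) (F : (X -> X -> R) -> Prop) (T : X -> X)
  (a1 a2 a3 a4 : X -> X -> R) : Prop :=
  (forall x y, 0 < a1 x y /\ 0 < a2 x y /\ 0 < a3 x y /\ 0 < a4 x y) /\
  (exists k, k < 1 /\ forall x y, a1 x y + a2 x y + a3 x y + 2 * a4 x y <= k) /\
  (forall x y (V1 V2 V3 V4 V5 : basic_rep X),
     valid_rep F V1 -> valid_rep F V2 -> valid_rep F V3 ->
     valid_rep F V4 -> valid_rep F V5 ->
     vset V1 x y -> vset V2 x (T x) -> vset V3 y (T y) ->
     vset V4 x (T y) -> vset V5 y (T x) ->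
     rcomp (vset (vscale (a1 x y) V1))
       (rcomp (vset (vscale (a2 x y) V2))
         (rcomp (vset (vscale (a3 x y) V3))
           (rcomp (vset (vscale (a4 x y) V4)) (vset (vscale (a4 x y) V5)))))
       (T x) (T y)).

Definition ciric (X : Type) (F : (X -> X -> R) -> Prop) (T : X -> X) : Prop :=
  exists a1 a2 a3 a4, ciric_with F T a1 a2 a3 a4.

(* Main.v *)
Require Import Defs.
From Stdlib Require Import Reals List Lra Lia Psatz.
Open Scope R_scope.
Import ListNotations.

Lemma pm_nonneg X (d : X->X->R) : is_pseudometric d -> forall x y, 0 <= d x y.
Proof. intros [h0 [hs ht]] x y. pose proof (ht x y x) as H. rewrite h0, (hs y x) in H. lra. Qed.

Lemma vset_single X (rho:X->X->R) r x y : vset [(rho,r)] x y <-> rho x y < r.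
Proof. unfold vset; split; intro H.
  - exact (Forall_inv H).
  - constructor; [simpl; assumption| constructor]. Qed.

Lemma valid_single X (F : (X->X->R)->Prop) rho r : F rho -> 0 < r -> valid_rep F [(rho,r)].
Proof. intros; split. discriminate. constructor; [simpl; auto| constructor]. Qed.

Lemma ciric_ineq X F (T : X -> X) a1 a2 a3 a4 rho : pm_family F -> ciric_with F T a1 a2 a3 a4 -> F rho -> forall x y,
 rho (T x) (T y) <= a1 x y * rho x y + a2 x y * rho x (T x) + a3 x y * rho y (T y) + a4 x y * (rho x (T y) + rho y (T x)).
Proof.
 intros [_ HF] [Hpos [_ Hc]] Hr x y.
 destruct (HF rho Hr) as [h0 [hs ht]].
 pose proof (pm_nonneg _ _ (HF rho Hr)) as hn.
 destruct (Hpos x y) as [p1 [p2 [p3 p4]]].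
 set (c := a1 x y + a2 x y + a3 x y + 2 * a4 x y).
 assert (Hc0 : 0 < c) by (unfold c; lra).
 assert (key : forall e, 0 < e -> rho (T x) (T y) < a1 x y * rho x y + a2 x y * rho x (T x) + a3 x y * rho y (T y) + a4 x y * (rho x (T y) + rho y (T x)) + c*e).
 { intros e He.
   pose proof (Hc x y [(rho, rho x y + e)] [(rho, rho x (T x) + e)] [(rho, rho y (T y)+e)] [(rho, rho x (T y) + e)] [(rho, rho y (T x) + e)]) as H.
   destruct H as [z1 [[z2 [[z3 [[z4 [H5 H4]] H3]] H2]] H1]];
     try (apply valid_single; [assumption| pose proof (hn x y); pose proof (hn x (T x)); pose proof (hn y (T y)); pose proof (hn x (T y)); pose proof (hn y (T x)); lra]);
     try (apply vset_single; lra).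
   unfold vscale in *; simpl in *.
   apply vset_single in H1. apply vset_single in H2. apply vset_single in H3.
   apply vset_single in H4. apply vset_single in H5.
   pose proof (ht (T x) z4 (T y)). pose proof (ht z4 z3 (T y)). pose proof (ht z3 z2 (T y)).
   pose proof (ht z2 z1 (T y)). unfold c. lra. }
 destruct (Rle_or_lt (rho (T x) (T y)) (a1 x y * rho x y + a2 x y * rho x (T x) + a3 x y * rho y (T y) + a4 x y * (rho x (T y) + rho y (T x)))) as [H|H]; [exact H|].
 exfalso.
 set (g := rho (T x) (T y) - (a1 x y * rho x y + a2 x y * rho x (T x) + a3 x y * rho y (T y) + a4 x y * (rho x (T y) + rho y (T x)))).
 assert (Hg : 0 < g) by (unfold g; lra).
 pose proof (key (g / (2*c)) ltac:(apply Rdiv_lt_0_compat; lra)) as K.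
 replace (c * (g / (2*c))) with (g/2) in K by (field; lra).
 unfold g in K. lra.
Qed.
Lemma list_cauchy X (F : (X->X->R)->Prop) (u:nat->X) :
  (forall rho, F rho -> forall e, 0<e -> exists N, forall m n, (N<=m)%nat -> (N<=n)%nat -> rho (u m) (u n) < e) ->
  forall l : basic_rep X, Forall (fun p => F (fst p) /\ 0 < snd p) l ->
  exists N, forall m n, (N<=m)%nat -> (N<=n)%nat -> vset l (u m) (u n).
Proof.
  intros H l. induction l as [|[rho r] l IH]; intros Hl.
  - exists 0%nat; intros; constructor.
  - destruct (Forall_inv Hl) as [Hr Hr0]. simpl in Hr, Hr0.
    destruct (IH (Forall_inv_tail Hl)) as [N1 H1].
    destruct (H rho Hr r Hr0) as [N2 H2].
    exists (max N1 N2); intros m n Hm Hn; constructor; [simpl; apply H2; lia | apply H1; lia].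
Qed.

Lemma cauchy_of X (F : (X->X->R)->Prop) (u:nat->X) :
  (forall rho, F rho -> forall e, 0<e -> exists N, forall m n, (N<=m)%nat -> (N<=n)%nat -> rho (u m) (u n) < e) ->
  cauchy F u.
Proof.
  intros H W [l [[_ Hl] HW]]. destruct (list_cauchy X F u H l Hl) as [N HN].
  exists N; intros; apply HW, HN; assumption.
Qed.

Lemma conv_rho X (F : (X->X->R)->Prop) (u:nat->X) p rho e :
  converges F u p -> F rho -> 0<e -> exists N, forall n, (N<=n)%nat -> rho (u n) p < e.
Proof.
  intros H Hr He. destruct (H (fun a b => rho a b < e)) as [N HN].
  - exists [(rho,e)]; split; [apply valid_single; auto|]. intros a b Hab; apply vset_single; exact Hab.
  - exists N; exact HN.
Qed.

Lemma eq_of_zero X (F : (X->X->R)->Prop) x y : separated F ->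
  (forall rho, F rho -> rho x y = 0) -> x = y.
Proof.
  intros Hs H. apply (proj1 (Hs x y)). intros W [l [[_ Hl] HW]]. apply HW. unfold vset.
  eapply Forall_impl; [|exact Hl]. intros [rho r] [Hr Hr0]; simpl in *. rewrite (H rho Hr). exact Hr0.
Qed.

Lemma step X F (T : X -> X) a1 a2 a3 a4 rho k : pm_family F -> ciric_with F T a1 a2 a3 a4 -> F rho ->
  (forall x y, a1 x y + a2 x y + a3 x y + 2 * a4 x y <= k) -> k < 1 ->
  forall y, rho (T y) (T (T y)) <= k * rho y (T y).
Proof.
  intros HP HC Hr Hk Hk1 y.
  pose proof (ciric_ineq X F T a1 a2 a3 a4 rho HP HC Hr y (T y)) as H.
  destruct HP as [_ HF]. destruct (HF rho Hr) as [h0 [hs ht]].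
  pose proof (pm_nonneg _ _ (HF rho Hr)) as hn.
  destruct HC as [Hpos _]. destruct (Hpos y (T y)) as [p1 [p2 [p3 p4]]].
  specialize (Hk y (T y)). rewrite h0 in H. pose proof (ht y (T y) (T (T y))).
  pose proof (hn y (T y)). pose proof (hn (T y) (T (T y))). pose proof (hn y (T (T y))).
  set (D := rho (T y) (T (T y))) in *. set (d := rho y (T y)) in *. set (b := rho y (T (T y))) in *.
  assert (a4 y (T y) * b <= a4 y (T y) * d + a4 y (T y) * D) by nra.
  destruct (Rle_or_lt D (k*d)) as [Q|Q]; [exact Q|exfalso].
  assert ((1 - a3 y (T y) - a4 y (T y)) * (D - k*d) > 0) by (apply Rmult_gt_0_compat; lra).
  assert ((a3 y (T y) + a4 y (T y)) * (1-k) * d >= 0).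
  { apply Rle_ge. apply Rmult_le_pos; [|lra]. apply Rmult_le_pos; lra. }
  nra.
Qed.
Lemma orbit_props X F (T : X -> X) a1 a2 a3 a4 k : pm_family F -> ciric_with F T a1 a2 a3 a4 ->
  (forall x y, a1 x y + a2 x y + a3 x y + 2 * a4 x y <= k) -> k < 1 ->
  forall x, cauchy F (fun n => Nat.iter n T x).
Proof.
  intros HP HC Hk Hk1 x. apply cauchy_of. intros rho Hr e He.
  assert (Hk0 : 0 < k).
  { destruct HC as [Hpos _]. destruct (Hpos x x) as [p1 [p2 [p3 p4]]]. specialize (Hk x x). lra. }
  pose proof HP as [_ HF]. destruct (HF rho Hr) as [h0 [hs ht]].
  pose proof (pm_nonneg _ _ (HF rho Hr)) as hn.
  set (d0 := rho x (T x)).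
  assert (geo : forall n, rho (Nat.iter n T x) (T (Nat.iter n T x)) <= k^n * d0).
  { induction n as [|n IH]; simpl. unfold d0; lra.
    pose proof (step X F T a1 a2 a3 a4 rho k HP HC Hr Hk Hk1 (Nat.iter n T x)). nra. }
  assert (cum : forall m j, (1-k) * rho (Nat.iter m T x) (Nat.iter (m+j) T x) <= k^m * d0 - k^(m+j) * d0).
  { intros m j; induction j as [|j IH].
    - rewrite Nat.add_0_r, h0. lra.
    - rewrite Nat.add_succ_r. simpl Nat.iter.
      change (k ^ S (m+j)) with (k * k^(m+j)).
      pose proof (ht (Nat.iter m T x) (Nat.iter (m+j) T x) (T (Nat.iter (m + j) T x))).
      pose proof (geo (m+j)%nat). nra. }
  assert (Hd0 : 0 <= d0) by apply hn.
  assert (Hy : 0 < e * (1-k) / (d0+1)) by (apply Rdiv_lt_0_compat; nra).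
  destruct (pow_lt_1_zero k ltac:(rewrite Rabs_pos_eq; lra) _ Hy) as [N HN].
  assert (main : forall m j, (N <= m)%nat -> rho (Nat.iter m T x) (Nat.iter (m+j) T x) < e).
  { intros m j Hm. specialize (HN m Hm). rewrite Rabs_pos_eq in HN by (apply pow_le; lra).
    pose proof (cum m j). pose proof (pow_le k (m+j) ltac:(lra)).
    assert (k^m * (d0+1) < e*(1-k)).
    { replace (e*(1-k)) with (e * (1-k) / (d0+1) * (d0+1)) by (field; lra).
      apply Rmult_lt_compat_r; lra. }
    pose proof (pow_le k m ltac:(lra)). nra. }
  exists N. intros m n Hm Hn.
  destruct (Nat.le_gt_cases m n) as [L|L].
  - replace n with (m + (n-m))%nat by lia. apply main; lia.
  - rewrite hs. replace m with (n + (m-n))%nat by lia. apply main; lia.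
Qed.

Lemma fixed_of_limit X F (T : X -> X) a1 a2 a3 a4 k x p : pm_family F -> separated F -> ciric_with F T a1 a2 a3 a4 ->
  (forall x y, a1 x y + a2 x y + a3 x y + 2 * a4 x y <= k) -> k < 1 ->
  converges F (fun n => Nat.iter n T x) p -> T p = p.
Proof.
  intros HP Hs HC Hk Hk1 Hc. symmetry. apply (eq_of_zero X F p (T p) Hs).
  intros rho Hr.
  pose proof HP as [_ HF]. destruct (HF rho Hr) as [h0 [hs ht]].
  pose proof (pm_nonneg _ _ (HF rho Hr)) as hn.
  destruct (Rle_or_lt (rho p (T p)) 0) as [Q|Q]; [pose proof (hn p (T p)); lra|exfalso].
  set (e := rho p (T p)) in *.
  destruct (conv_rho X F _ p rho ((1-k)*e/8) Hc Hr ltac:(apply Rdiv_lt_0_compat; nra)) as [N HN].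
  pose proof (HN N (le_n _)) as U. pose proof (HN (S N) (le_S _ _ (le_n _))) as V. simpl in V.
  set (y := Nat.iter N T x) in *.
  pose proof (ciric_ineq X F T a1 a2 a3 a4 rho HP HC Hr y p) as H.
  pose proof (ht p (T y) (T p)). pose proof (ht y p (T y)). pose proof (ht y p (T p)).
  rewrite (hs p (T y)) in *.
  destruct HC as [Hpos _]. destruct (Hpos y p) as [p1 [p2 [p3 p4]]]. specialize (Hk y p).
  pose proof (hn y p). pose proof (hn (T y) p). pose proof (hn y (T y)). pose proof (hn y (T p)).
  pose proof (hn p (T p)). repeat match goal with Hx : context [rho p (T p)] |- _ => fold e in Hx end.
  set (u := rho y p) in *. set (v := rho (T y) p) in *. set (w := rho y (T y)) in *.
  set (z := rho y (T p)) in *. set (t := rho (T y) (T p)) in *.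
  assert (a2 y p * w <= a2 y p * (u+v)) by (apply Rmult_le_compat_l; lra).
  assert (a4 y p * z <= a4 y p * (u+e)) by (apply Rmult_le_compat_l; lra).
  assert (a1 y p * u <= 1 * u) by (apply Rmult_le_compat_r; lra).
  assert (a2 y p * (u+v) <= 1 * (u+v)) by (apply Rmult_le_compat_r; lra).
  assert (a4 y p * (u+v) <= 1 * (u+v)) by (apply Rmult_le_compat_r; lra).
  assert ((k - a3 y p - a4 y p) * e >= 0) by (apply Rle_ge, Rmult_le_pos; lra).
  assert (Hm : (1-k)*e/8 * 8 = (1-k)*e) by field.
  set (dl := (1-k)*e/8) in *. lra.
Qed.

Lemma unique_fixed X F (T : X -> X) a1 a2 a3 a4 p q : pm_family F -> separated F -> ciric_with F T a1 a2 a3 a4 ->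
  T p = p -> T q = q -> q = p.
Proof.
  intros HP Hs HC Hp Hq. apply (eq_of_zero X F q p Hs). intros rho Hr.
  pose proof HP as [_ HF]. destruct (HF rho Hr) as [h0 [hs ht]].
  pose proof (pm_nonneg _ _ (HF rho Hr)) as hn.
  pose proof (ciric_ineq X F T a1 a2 a3 a4 rho HP HC Hr q p) as H.
  rewrite Hp, Hq, !h0, (hs p q) in H.
  destruct HC as [Hpos [[k [Hk1 Hk]] _]]. destruct (Hpos q p) as [p1 [p2 [p3 p4]]]. specialize (Hk q p).
  pose proof (hn q p). nra.
Qed.

Theorem corollary1 (X : Type) (x0 : X) (F : (X -> X -> R) -> Prop) (T : X -> X) :
  pm_family F -> separated F -> seq_complete F -> ciric F T ->
  (forall x, exists p, T p = p /\ converges F (fun n => Nat.iter n T x) p) /\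
  ((exists a1 a2 a3 a4, ciric_with F T a1 a2 a3 a4 /\ (forall x y, a2 x y = a3 x y)) ->
   exists p, T p = p /\ (forall q, T q = q -> q = p) /\
             (forall x, converges F (fun n => Nat.iter n T x) p)).
Proof.
  intros HP Hs Hcomp [a1 [a2 [a3 [a4 HC]]]].
  pose proof HC as [_ [[k [Hk1 Hk]] _]].
  assert (P1 : forall x, exists p, T p = p /\ converges F (fun n => Nat.iter n T x) p).
  { intros x. destruct (Hcomp _ (orbit_props X F T a1 a2 a3 a4 k HP HC Hk Hk1 x)) as [p Hp].
    exists p; split; [eapply fixed_of_limit; eauto | exact Hp]. }
  split; [exact P1|]. intros _.
  destruct (P1 x0) as [p [Hp _]]. exists p; split; [exact Hp|]. split.
  - intros q Hq. eapply unique_fixed; eauto.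
  - intros x. destruct (P1 x) as [p' [Hp' Hc']].
    rewrite <- (unique_fixed X F T a1 a2 a3 a4 p p' HP Hs HC Hp Hp'). exact Hc'.
Qed.
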